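(* Let $\Delta>1$ and $D\le n/2$. Suppose $M\in\mathbb{F}_2^{m\times n}$ is a matrix capable of $\Delta$-approximating $d=\|\mathbf{x}\|_0$ (in the group testing model) for all $\mathbf{x}\in\mathbb{F}_2^n$ with $d\le D$. Then necessarily $$m\ge\left(\frac{D}{\Delta^2}-1\right)\log\frac{n}{D-\Delta^2}-\left(\frac{D}{\Delta^2}-1\right)\log e=\Omega\!\left(\frac{D}{\Delta^2}\log\frac{n}{D}\right).$$
   Context: $\log$ denotes $\log_2$. $\|\mathbf{x}\|_0$ is the number of nonzero entries of $\mathbf{x}$. Group testing model: for $M\in\mathbb{F}_2^{m\times n}$ and $\mathbf{x}\in\mathbb{F}_2^n$, $M\odot\mathbf{x}\in\mathbb{F}_2^m$ is defined by $(M\odot\mathbf{x})_i=\bigvee_{j:M_{ij}=1}\mathbf{x}_j$ (logical OR). $M$ is capable of $\Delta$-approximating $d$ when $d\le D$ if there is a deterministic decoder which, given only $M\odot\mathbf{x}$, outputs $\hat d$ with $\frac1\Delta\le\frac{\hat d}{d}\le\Delta$ for every $\mathbf{x}$ with $d=\|\mathbf{x}\|_0\le D$. *)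

(* Defs.v *)
From HB Require Import structures.
From mathcomp Require Import all_boot all_order all_algebra.
From mathcomp Require Import reals sequences exp.
Set Implicit Arguments. Unset Strict Implicit. Unset Printing Implicit Defensive.
Import Order.TTheory GRing.Theory Num.Theory.
Local Open Scope ring_scope.

(* F_2 entries are represented by bool (true = 1). *)

Definition gt_mul (m n : nat) (M : 'M[bool]_(m, n)) (x : {ffun 'I_n -> bool})
  : {ffun 'I_m -> bool} := [ffun i => [exists j, M i j && x j]].

Definition wt (n : nat) (x : {ffun 'I_n -> bool}) : nat := #|[set j | x j]|.

(* M is capable of Delta-approximating d when d <= D: a deterministic decoder
   seeing only M ⊙ x outputs dhat with 1/Delta <= dhat/d <= Delta
   (for every x with 1 <= d <= D; the ratio is undefined at d = 0). *)
Definition approximates (R : realType) (m n : nat) (M : 'M[bool]_(m, n))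
  (Delta : R) (D : nat) : Prop :=
  exists dec : {ffun 'I_m -> bool} -> R,
    forall x : {ffun 'I_n -> bool}, (0 < wt x <= D)%N ->
      1 / Delta <= dec (gt_mul M x) / (wt x)%:R <= Delta.

Definition log2 (R : realType) (x : R) : R := ln x / ln 2.

(* Main.v *)
Require Import Defs.
From HB Require Import structures.
From mathcomp Require Import all_boot all_order all_algebra.
From mathcomp Require Import reals sequences exp.
From mathcomp Require Import zify ring lra.
Import Order.TTheory GRing.Theory Num.Theory.
Local Open Scope ring_scope.

Lemma extend_set (T : finType) (C : {set T}) (k : nat) : forall S : {set T},
  S \subset C -> (#|S| + k <= #|C|)%N ->
  exists Z : {set T}, [/\ S \subset Z, Z \subset C & #|Z| = (#|S| + k)%N].
Proof.
elim: k => [|k IH] S SC Hk.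
  by exists S; rewrite addn0.
have : (#|S| < #|C|)%N by lia.
move=> lt; have : (0 < #|C :\: S|)%N by rewrite cardsD (setIidPr SC); lia.
case/card_gt0P => x; rewrite inE => /andP [xS xC].
have SC' : (x |: S) \subset C by rewrite subUset sub1set xC.
have cx : #|x |: S| = (#|S|).+1 by rewrite cardsU1 xS.
case: (IH (x |: S) SC'); first by rewrite cx; lia.
move=> Z [h1 h2 h3]; exists Z; split => //.
  by apply: subset_trans h1; apply: subsetUr.
by rewrite h3 cx; lia.
Qed.

Lemma last_true (P : nat -> bool) (N : nat) : P 0%N -> ~~ P N ->
  exists a, P a && ~~ P a.+1.
Proof.
elim: N => [|N IH] P0 PN; first by rewrite P0 in PN.
case HN: (P N); first by exists N; rewrite HN.
by apply: IH => //; rewrite HN.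
Qed.

Lemma ffact_ineq (n L a : nat) : (L <= n)%N -> (n ^ a * L ^_ a <= n ^_ a * L ^ a)%N.
Proof.
move=> Ln; elim: a => [|a IH]; first by rewrite !expn0 !ffactn0.
rewrite !ffactnSr !expnS.
have h : (n * (L - a) <= (n - a) * L)%N.
  case: (leqP a L) => h.
    nia.
  have -> : (L - a = 0)%N by lia.
  by rewrite muln0.
have := leq_mul IH h. 
move=> H. apply: (leq_trans _ (leq_trans H _)); apply: eq_leq; ring.
Qed.

Section Comb.
Variables (m n : nat) (M : 'M[bool]_(m, n)).
Definition xs (S : {set 'I_n}) : {ffun 'I_n -> bool} := [ffun j => j \in S].
Definition out (S : {set 'I_n}) := gt_mul M (xs S).
Definition Cov (y : {ffun 'I_m -> bool}) : {set 'I_n} := [set j | [forall i, M i j ==> y i]].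

Lemma wt_xs (S : {set 'I_n}) : wt (xs S) = #|S|.
Proof. by rewrite /wt; apply: eq_card => j; rewrite !inE ffunE. Qed.

Lemma out_mono (S T : {set 'I_n}) : S \subset T -> forall i, out S i -> out T i.
Proof.
move=> ST i; rewrite /out /gt_mul !ffunE => /existsP [j /andP [Mij]].
rewrite ffunE => jS; apply/existsP; exists j; rewrite Mij ffunE.
exact: (subsetP ST).
Qed.

Lemma sub_cov (S : {set 'I_n}) : S \subset Cov (out S).
Proof.
apply/subsetP => j jS; rewrite inE; apply/forallP => i; apply/implyP => Mij.
rewrite /out /gt_mul ffunE; apply/existsP; exists j; by rewrite Mij ffunE.
Qed.

Lemma out_cov (y : {ffun 'I_m -> bool}) (i : 'I_m) : out (Cov y) i -> y i.
Proof.
rewrite /out /gt_mul !ffunE => /existsP [j /andP [Mij]].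
rewrite ffunE inE => /forallP /(_ i); by rewrite Mij.
Qed.

Lemma out_between (S Z : {set 'I_n}) : S \subset Z -> Z \subset Cov (out S) -> out Z = out S.
Proof.
move=> SZ ZC; apply/ffunP => i; apply/idP/idP.
  by move=> h; apply: out_cov; apply: out_mono h.
by apply: out_mono.
Qed.

Lemma count_bound (a K : nat) :
  (forall S : {set 'I_n}, #|S| = a -> (#|Cov (out S)| <= K)%N) ->
  ('C(n, a) <= 2 ^ m * 'C(K, a))%N.
Proof.
move=> HK.
have -> : 'C(n, a) = #|[set S : {set 'I_n} | #|S| == a]| by rewrite card_draws card_ord.
rewrite -sum1_card (partition_big (out) predT) //=.
have -> : (2 ^ m = #|{ffun 'I_m -> bool}|)%N by rewrite card_ffun card_bool card_ord.
rewrite -sum_nat_const; apply: leq_sum => y _.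
case: (pickP (fun S => (S \in [set S : {set 'I_n} | #|S| == a]) && (out S == y))) => [S0 /andP [HS0 /eqP HY]|H0]; last first.
  by rewrite big_pred0.
rewrite inE in HS0.
apply: (@leq_trans #|[set S : {set 'I_n} | S \subset Cov y & #|S| == a]|).
  rewrite sum1_card; apply: subset_leq_card; apply/subsetP => S; rewrite !inE.
  rewrite unfold_in /= inE => /andP [-> /eqP <-]; by rewrite sub_cov.
rewrite cards_draws; apply: leq_bin2l; rewrite -HY; apply: HK; exact/eqP.
Qed.
End Comb.
Arguments xs {n}. Arguments out {m n}. Arguments Cov {m n}.
Arguments wt_xs {n}. Arguments out_mono {m n}. Arguments sub_cov {m n}.
Arguments out_cov {m n}. Arguments out_between {m n}. Arguments count_bound {m n}.
Lemma ratio_bound (R : realType) (Dl d z a : R) : 1 < Dl -> 0 < z -> 0 < a ->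
  1 / Dl <= d / z -> d / a <= Dl -> z <= Dl ^+ 2 * a.
Proof.
move=> D1 z0 a0 H1 H2.
rewrite ler_pdivlMr // in H1; rewrite ler_pdivrMr // in H2.
have Dl0 : 0 < Dl by lra.
have -> : z = Dl * (1 / Dl * z) by field; lra.
rewrite expr2 -[Dl * Dl * a]mulrA; apply: ler_wpM2l; first lra.
lra.
Qed.

Lemma ln2_bounds (R : realType) : 1 / 2 <= ln (2 : R) <= 1.
Proof.
apply/andP; split.
  have h : ln (1 + (- (1/2)) : R) <= - (1/2) by apply: le_ln1Dx; lra.
  have e : (1 + (- (1/2)) : R) = 2^-1 by field.
  rewrite e lnV ?posrE // in h; lra.
have h : ln (1 + 1 : R) <= 1 by apply: le_ln1Dx; lra.
by move: h; rewrite (_ : 1 + 1 = 2 :> R) //.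
Qed.

Lemma ln_half (R : realType) (x : R) : 0 < x -> ln x <= x / 2.
Proof.
move=> x0.
have h : ln (1 + (x / 2 - 1)) <= x / 2 - 1 by apply: le_ln1Dx; lra.
have e : 1 + (x / 2 - 1) = x / 2 by ring.
rewrite e ln_div ?posrE // in h.
have /andP [_ ?] := ln2_bounds R; lra.
Qed.

Lemma final_ineq (R : realType) (T a D n mm : R) : 1 < T -> 1 <= a -> a * T < D ->
  D <= (a + 1) * T -> 2 * D <= n ->
  a * (ln n - ln (T * a)) <= mm * ln 2 ->
  (D / T - 1) * log2 (n / (D - T)) - (D / T - 1) * log2 (expR 1) <= mm.
Proof.
move=> T1 a1 aD Da Dn Hm.
have T0 : 0 < T by lra.
have [l2a l2b] := andP (ln2_bounds R).
set a' := D / T - 1.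
have eDT : D - T = T * a' by rewrite /a'; field; lra.
have a'0 : 0 < a'.
  rewrite /a' subr_gt0 ltr_pdivlMr // mul1r; nra.
have a'a : a' <= a.
  rewrite /a' lerBlDr ler_pdivrMr //; nra.
have n0 : 0 < n by nra.
have Ta0 : 0 < T * a by nra.
have Ta'0 : 0 < T * a' by nra.
set L := ln n - ln (T * a).
set l := ln (T * a) - ln (T * a').
have HL : 1 / 2 <= L.
  rewrite /L -ln_div ?posrE //.
  have : ln 2 <= ln (n / (T * a)).
    rewrite ler_ln ?posrE ?divr_gt0 // ler_pdivlMr //; nra.
  lra.
have Hl : a' * l <= a / 2.
  rewrite /l -ln_div ?posrE //.
  have := ln_half _ _ (divr_gt0 Ta0 Ta'0).
  have -> : T * a / (T * a') / 2 = a / a' / 2 by field; rewrite ?(gt_eqF a'0) ?(gt_eqF T0).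
  move=> h; have := ler_wpM2l (ltW a'0) h.
  have -> : a' * (a / a' / 2) = a / 2 by field; rewrite (gt_eqF a'0).
  done.
rewrite /log2 expRK eDT ln_div ?posrE //.
have -> : ln n - ln (T * a') = L + l by rewrite /L /l; ring.
have ln20 : 0 < ln (2:R) by lra.
have -> : a' * ((L + l) / ln 2) - a' * (1 / ln 2) = (a' * (L + l) - a' * 1) / ln 2.
  by field; rewrite (gt_eqF ln20).
rewrite ler_pdivrMr //.
move: Hm; rewrite -/L => Hm.
clearbody L l.
suff : a' * (L + l) - a' * 1 <= a * L by lra.
case: (lerP 1 L) => hL.
  have : 0 <= (a - a') * (L - 1) by apply: mulr_ge0; lra.
  nra.
have : 0 <= a' * (1 - L) by apply: mulr_ge0; lra.
have : 0 <= a * (L - 1/2) by apply: mulr_ge0; lra.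
nra.
Qed.

Theorem theorem2 (R : realType) (m n D : nat) (Delta : R) (M : 'M[bool]_(m, n)) :
  1 < Delta -> (2 * D <= n)%N -> Delta ^+ 2 < D%:R ->
  approximates M Delta D ->
  (D%:R / Delta ^+ 2 - 1) * log2 (n%:R / (D%:R - Delta ^+ 2))
    - (D%:R / Delta ^+ 2 - 1) * log2 (expR 1) <= m%:R.
Proof.
move=> D1 Dn TD [dec Hdec].
set T := Delta ^+ 2.
have TD2 : T < D%:R by [].
have T1 : 1 < T by rewrite /T expr2; nra.
have [a /andP [Pa nPa]] : exists a, ((a%:R * T < D%:R) && ~~ ((a.+1)%:R * T < D%:R)).
  apply: (@last_true (fun k => k%:R * T < D%:R) D).
    by rewrite /= mul0r; lra.
  rewrite -leNgt; have : (0 : R) <= D%:R by rewrite ler0n.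
  nra.
rewrite -leNgt in nPa.
have a1 : (1 <= a)%N.
  case: a Pa nPa => // _; rewrite mul1r => h; lra.
have a1R : (1 : R) <= a%:R by rewrite ler1n.
have aD : (a < D)%N.
  rewrite -(ltr_nat R); nra.
have an : (a <= n)%N by lia.
have key : forall S : {set 'I_n}, #|S| = a -> (#|Cov M (out M S)|%:R <= T * a%:R).
  move=> S HS.
  set C := Cov M (out M S).
  have SC : S \subset C by apply: sub_cov.
  have gen : forall Z : {set 'I_n}, S \subset Z -> Z \subset C -> (#|Z| <= D)%N ->
      #|Z|%:R <= T * a%:R.
    move=> Z SZ ZC ZD.
    have eZ := out_between M _ _ SZ ZC.
    have aZ : (a <= #|Z|)%N by rewrite -HS; apply: subset_leq_card.
    have h1 := Hdec (xs Z); rewrite wt_xs in h1.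
    have c1 : (0 < #|Z| <= D)%N.
      apply/andP; split => //; exact: (leq_trans a1 aZ).
    have /andP [h1a _] := h1 c1.
    have h2 := Hdec (xs S); rewrite wt_xs in h2.
    have c2 : (0 < #|S| <= D)%N by rewrite HS a1 (ltnW aD).
    have /andP [_ h2b] := h2 c2.
    rewrite -/(out M Z) eZ in h1a; rewrite -/(out M S) HS in h2b.
    have z0 : (0 : R) < #|Z|%:R by rewrite ltr0n; exact: (leq_trans a1 aZ).
    have a0 : (0 : R) < a%:R by rewrite ltr0n.
    exact: (ratio_bound _ _ _ _ _ D1 z0 a0 h1a h2b).
  case: (leqP #|C| D) => hC; first by apply: gen.
  have hk : (#|S| + (D - a) <= #|C|)%N by rewrite HS; lia.
  have [Z [SZ ZC cZ]] := @extend_set _ C (D - a) S SC hk.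
  have := gen Z SZ ZC; rewrite cZ HS.
  have -> : (a + (D - a) = D)%N by lia.
  move=> /(_ (leqnn D)) h; lra.
have [S0 HS0] : exists S0 : {set 'I_n}, #|S0| = a.
  have : (0 < #|[set S : {set 'I_n} | #|S| == a]|)%N by rewrite card_draws card_ord bin_gt0.
  by case/card_gt0P => S0; rewrite inE => /eqP h; exists S0.
set K := \max_(S : {set 'I_n} | #|S| == a) #|Cov M (out M S)|.
have HK : forall S : {set 'I_n}, #|S| = a -> (#|Cov M (out M S)| <= K)%N.
  move=> S HS.
  exact: (@leq_bigmax_cond _ (fun S : {set 'I_n} => #|S| == a) (fun S => #|Cov M (out M S)|) S (introT eqP HS)).
have A0 : (0 < #|(fun S : {set 'I_n} => #|S| == a)|)%N.
  by apply/card_gt0P; exists S0; rewrite unfold_in /= HS0.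
have [Smax HSmax eK] := eq_bigmax_cond (fun S : {set 'I_n} => #|Cov M (out M S)|) A0.
have KR : (K%:R : R) <= T * a%:R.
  rewrite /K eK; apply: key; move: HSmax; rewrite unfold_in /=; exact/eqP.
have aK : (a <= K)%N.
  rewrite -{1}HS0; apply: leq_trans (HK S0 HS0); exact: subset_leq_card (sub_cov M S0).
have Kn : (K <= n)%N.
  rewrite /K eK; apply: leq_trans (max_card _) _; by rewrite card_ord.
have cnt := count_bound M a K HK.
have nat1 : (n ^ a <= 2 ^ m * K ^ a)%N.
  have f := ffact_ineq n K a Kn.
  rewrite -!bin_ffact in f.
  have f2 : (n ^ a * 'C(K, a) <= 'C(n, a) * K ^ a)%N.
    rewrite -(leq_pmul2r (fact_gt0 a)).
    by rewrite -[(n ^ a * _ * _)%N]mulnA [X in (_ <= X)%N]mulnAC.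
  have f3 : (n ^ a * 'C(K, a) <= 2 ^ m * K ^ a * 'C(K, a))%N.
    apply: (leq_trans f2).
    rewrite [(2 ^ m * K ^ a * 'C(K, a))%N]mulnAC; exact: leq_mul cnt (leqnn _).
  by rewrite leq_pmul2r ?bin_gt0 in f3.
have n0 : (0 < n)%N by apply: leq_trans Dn; rewrite muln_gt0 /= (leq_ltn_trans _ aD).
have a0R : (0 : R) < a%:R by rewrite ltr0n.
have T0 : (0 : R) < T by lra.
have Ta0 : (0 : R) < T * a%:R by apply: mulr_gt0.
have real1 : (n%:R : R) ^+ a <= 2 ^+ m * (T * a%:R) ^+ a.
  have : ((n ^ a)%:R : R) <= (2 ^ m * K ^ a)%:R by rewrite ler_nat.
  rewrite natrM !natrX => h; apply: (le_trans h).
  apply: ler_wpM2l; first by apply: exprn_ge0.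
  apply: lerXn2r => //; rewrite ?nnegrE ?ler0n //; lra.
have real2 : a%:R * (ln (n%:R : R) - ln (T * a%:R)) <= m%:R * ln (2 : R).
  have h := real1.
  rewrite -ler_ln ?posrE ?exprn_gt0 ?mulr_gt0 ?ltr0n // in h.
  - rewrite lnM ?posrE ?exprn_gt0 ?ltr0n // !lnXn ?ltr0n // in h.
    move: h; rewrite -[ln n%:R *+ a]mulr_natl -[ln 2 *+ m]mulr_natl -[ln (T * a%:R) *+ a]mulr_natl.
    rewrite [m%:R * _]mulrC mulrBr; clear; lra.
  - by apply: exprn_gt0.
  - by apply: exprn_gt0.
apply: (@final_ineq R T a%:R D%:R n%:R m%:R T1 a1R Pa _ _ real2).
- by move: nPa; rewrite -addn1 natrD.
- have : ((2 * D)%N%:R : R) <= n%:R by rewrite ler_nat.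
  by rewrite natrM.
Qed.
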